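(* Let $k\ge3$, $n\ge0$, $G\in\mathcal G_k(n)$, and let $v$ be a $G$-good vertex. Then $d_G(v)\le\delta_k(n)$.
   Context: $d_G(v)$ is the degree of vertex $v$ in the hypergraph $G$. For $k\ge3$, $n\ge0$, the family $\mathcal G_k(n)$ of $n$-vertex $k$-uniform hypergraphs is defined inductively: for $n<k$ it consists of the single edgeless $n$-vertex $k$-graph; for $n\ge k$, $G\in\mathcal G_k(n)$ if its vertex set $V$ has a partition $V=V_1\cup\dots\cup V_k$ (the defining partition) with $0\le|V_i|<n$ for all $i$, such that $G[V_i]\in\mathcal G_k(|V_i|)$ for each $i$, and the edges of $G$ are the edges of the $G[V_i]$ together with all $k$-sets having exactly one vertex in each $V_i$. $H_k(n)\in\mathcal G_k(n)$ is defined by: for $n<k$ it is the edgeless graph; for $n\ge k$ its defining partition is equitable ($||V_i|-|V_j||\le1$) and $H_k(n)[V_i]\cong H_k(|V_i|)$ for each $i$. A vertex $v$ of $G\in\mathcal G_k(n)$ is $G$-good if either $n<k$, or $n\ge k$ and, with defining partition $V_1\cup\dots\cup V_k$, $v$ lies in a part $V_i$ of maximum size and $v$ is $G[V_i]$-good. $\delta_k(n)$ denotes $d_{H_k(n)}(v)$ for an $H_k(n)$-good vertex $v$ (all $H_k(n)$-good vertices have the same degree). *)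

(* Defs.v *)
From mathcomp Require Import all_boot.
Set Implicit Arguments. Unset Strict Implicit. Unset Printing Implicit Defensive.

Section Hyper.
Variable T : finType.
Variable k : nat.

Definition deg (E : {set {set T}}) (v : T) : nat := #|[set e in E | v \in e]|.

(* P : 'I_k -> {set T} is a partition of V into k (possibly empty) parts,
   each of size < |V| *)
Definition kpartition (V : {set T}) (P : 'I_k -> {set T}) : Prop :=
  [/\ forall i j, i != j -> [disjoint P i & P j],
      \bigcup_(i < k) P i = V &
      forall i, #|P i| < #|V| ].

Definition equitable (P : 'I_k -> {set T}) : Prop :=
  forall i j, #|P i| <= #|P j| + 1.

Definition joinE (V : {set T}) (P : 'I_k -> {set T})
    (Es : 'I_k -> {set {set T}}) : {set {set T}} :=
  (\bigcup_(i < k) Es i) :|: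
  [set e : {set T} | [&& e \subset V, #|e| == k & [forall i, #|e :&: P i| == 1]]].

(* inG V E : the hypergraph (V, E) belongs to G_k(|V|) *)
Inductive inG : {set T} -> {set {set T}} -> Prop :=
| inG_small (V : {set T}) : #|V| < k -> inG V set0
| inG_step (V : {set T}) (P : 'I_k -> {set T}) (Es : 'I_k -> {set {set T}}) : k <= #|V| -> kpartition V P ->
    (forall i, inG (P i) (Es i)) -> inG V (joinE V P Es).

(* goodG V E v : v is a good vertex of (V,E) in G_k(|V|), with respect to a
   defining partition (recursively) *)
Inductive goodG : {set T} -> {set {set T}} -> T -> Prop :=
| goodG_small (V : {set T}) (v : T) : #|V| < k -> v \in V -> goodG V set0 v
| goodG_step (V : {set T}) (P : 'I_k -> {set T}) (Es : 'I_k -> {set {set T}}) (i : 'I_k) (v : T) : k <= #|V| -> kpartition V P ->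
    (forall j, inG (P j) (Es j)) ->
    (forall j, #|P j| <= #|P i|) -> goodG (P i) (Es i) v ->
    goodG V (joinE V P Es) v.

(* isH V E : (V,E) is (a copy of) H_k(|V|) *)
Inductive isH : {set T} -> {set {set T}} -> Prop :=
| isH_small (V : {set T}) : #|V| < k -> isH V set0
| isH_step (V : {set T}) (P : 'I_k -> {set T}) (Es : 'I_k -> {set {set T}}) : k <= #|V| -> kpartition V P -> equitable P ->
    (forall i, isH (P i) (Es i)) -> isH V (joinE V P Es).

(* goodH V E v : v is an H_k(|V|)-good vertex (w.r.t. its equitable
   defining partition) *)
Inductive goodH : {set T} -> {set {set T}} -> T -> Prop :=
| goodH_small (V : {set T}) (v : T) : #|V| < k -> v \in V -> goodH V set0 v
| goodH_step (V : {set T}) (P : 'I_k -> {set T}) (Es : 'I_k -> {set {set T}}) (i : 'I_k) (v : T) : k <= #|V| -> kpartition V P -> equitable P ->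
    (forall j, isH (P j) (Es j)) ->
    (forall j, #|P j| <= #|P i|) -> goodH (P i) (Es i) v ->
    goodH V (joinE V P Es) v.

End Hyper.

(* Main.v *)
Require Import Defs.
From mathcomp Require Import all_boot.
From mathcomp Require Import zify.
Set Implicit Arguments. Unset Strict Implicit. Unset Printing Implicit Defensive.

Section Num.
Variable p : nat.
Hypothesis p_gt0 : 0 < p.

Definition can (s : nat) (t : 'I_p) : nat := s %/ p + (t < s %% p).
Definition Q (s : nat) : nat := \prod_(t < p) can s t.
Definition Dl (s : nat) : nat := \prod_(t < p | (t : nat) != s %% p) can s t.

Lemma divmodS s : (s.+1 %/ p = s %/ p /\ s.+1 %% p = (s %% p).+1 /\ (s %% p).+1 < p)
  \/ (s.+1 %/ p = (s %/ p).+1 /\ s.+1 %% p = 0 /\ (s %% p).+1 = p).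
Proof.
have hs : s.+1 = s %/ p * p + (s %% p).+1 by rewrite {1}(divn_eq s p) addnS.
have hr : s %% p < p by rewrite ltn_pmod.
case: (ltngtP (s %% p).+1 p) => h.
- left; rewrite hs divnMDl // modnMDl (divn_small h) (modn_small h); lia.
- lia.
- right; rewrite hs h -[X in _ + X](mul1n p) -mulnDl mulnK // modnMl; split => //; lia.
Qed.

Lemma canS s t : can s.+1 t = can s t + ((t : nat) == s %% p).
Proof.
rewrite /can; have ht := ltn_ord t.
case: (divmodS s) => [[-> [-> _]]|[-> [-> h]]].
- rewrite ltnS; case: (ltngtP t (s %% p)) => h; lia.
- rewrite ltn0 addn0; have : t < (s %% p) \/ (t:nat) = s %% p by lia.
  case=> [lt|->]; first by rewrite lt (ltn_eqF lt); lia.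
  by rewrite ltnn eqxx; lia.
Qed.

Lemma QS s : Q s.+1 = Q s + Dl s.
Proof.
have hr : s %% p < p by rewrite ltn_pmod.
have E : \prod_(i < p | i != Ordinal hr) can s.+1 i = \prod_(t < p | (t:nat) != s %% p) can s t.
  apply: (@eq_big _ _ _ _ _ (fun i => i != Ordinal hr) (fun t => (t:nat) != s %% p)) => [t //|t ht]; rewrite canS.
  move: ht => /= ht; have -> : ((t:nat) == s %% p) = false by apply/negbTE.
  by rewrite addn0.
rewrite /Q /Dl (bigD1 (Ordinal hr)) //= [in RHS](bigD1 (Ordinal hr)) //= E canS eqxx.
by rewrite mulnDl mul1n.
Qed.

Lemma prod_swap (y : 'I_p -> nat) (a b : 'I_p) : y b <= y a ->
  \prod_(t < p | t != a) y t <= \prod_(t < p | t != b) y t.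
Proof.
move=> hab; case: (eqVneq a b) => [->//|nab].
rewrite (bigD1 b) 1?eq_sym //= [X in _ <= X](bigD1 a) //=.
rewrite mulnC [X in _ <= X]mulnC; apply: leq_mul => //.
by apply: eq_leq; apply: eq_bigl => t; rewrite andbC.
Qed.

Lemma DlS s : Dl s <= Dl s.+1.
Proof.
have hr : s %% p < p by rewrite ltn_pmod.
have hr' : s.+1 %% p < p by rewrite ltn_pmod.
have -> : Dl s = \prod_(t < p | t != Ordinal hr) can s t by [].
have -> : Dl s.+1 = \prod_(t < p | t != Ordinal hr') can s.+1 t by [].
apply: (@leq_trans (\prod_(t < p | t != Ordinal hr) can s.+1 t)).
  by apply: leq_prod => t _; rewrite canS leq_addr.
apply: prod_swap; rewrite canS /can /=.
case: (divmodS s) => [[-> [-> _]]|[-> [-> _]]]; case: (ltngtP (s %% p) 0) => h; try lia; rewrite ?ltnSn ?eqn_leq ?ltnn; lia.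
Qed.

Lemma Dl_mono a b : a <= b -> Dl a <= Dl b.
Proof.
move=> hab; rewrite -(subnKC hab); elim: (b - a) => [|d IH]; first by rewrite addn0.
by rewrite addnS; apply: leq_trans IH (DlS _).
Qed.

Lemma Q_mono a b : a <= b -> Q a <= Q b.
Proof.
move=> hab; rewrite -(subnKC hab); elim: (b - a) => [|d IH]; first by rewrite addn0.
by rewrite addnS QS; apply: leq_trans IH (leq_addr _ _).
Qed.

Lemma Q_small s : s < p -> Q s = 0.
Proof.
move=> hs; rewrite /Q (bigD1 (Ordinal hs)) //= /can divn_small // modn_small //.
by rewrite ltnn.
Qed.

Lemma Q0 : Q 0 = 0.
Proof. exact: Q_small. Qed.

Lemma Qmaj x y L : x <= y -> Q (x + L) + Q y <= Q (y + L) + Q x.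
Proof.
move=> hxy; elim: L => [|L IH]; first by rewrite !addn0 addnC.
rewrite !addnS !QS.
have h : x + L <= y + L by rewrite leq_add2r.
have := Dl_mono h; lia.
Qed.

Lemma Qsup a b : Q a + Q b <= Q (a + b).
Proof. have := @Qmaj 0 b a (leq0n b); rewrite Q0 add0n addn0 (addnC b a); done. Qed.

Lemma sum_can s : \sum_(t < p) can s t = s.
Proof.
rewrite /can big_split /= sum_nat_const card_ord.
have hr : s %% p <= p by rewrite ltnW // ltn_pmod.
have -> : \sum_(t < p) (t < s %% p) = s %% p.
  rewrite -(big_mkord xpredT (fun t => (t < s %% p) : nat)).
  rewrite (@big_cat_nat _ _ _ (s %% p)) //=.
  rewrite (@eq_big_nat _ _ _ 0 (s %% p) _ (fun => 1)); last by move=> i /andP[_ ->].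
  rewrite sum_nat_const_nat subn0 muln1.
  rewrite big_nat_cond big1 ?addn0 // => i /andP[/andP[h1 _] _].
  by rewrite ltnNge h1.
by rewrite mulnC -divn_eq.
Qed.

Lemma can_eq s x y : can s x <= can s y + 1.
Proof. by rewrite /can; case: (_ < _); case: (_ < _); lia. Qed.

End Num.

Section AMGM.
Variable I : finType.

Lemma big2 (R : Type) (idx : R) (op : Monoid.com_law idx) (F : I -> R) (x y : I) :
  x != y -> \big[op/idx]_t F t = op (F x) (op (F y) (\big[op/idx]_(t | (t != x) && (t != y)) F t)).
Proof. by move=> nxy; rewrite (bigD1 x) //= (bigD1 y) //= eq_sym. Qed.

Lemma prod2 (F : I -> nat) (x y : I) : x != y ->
  \prod_t F t = F x * (F y * \prod_(t | (t != x) && (t != y)) F t).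
Proof. exact: big2. Qed.
Lemma sum2 (F : I -> nat) (x y : I) : x != y ->
  \sum_t F t = F x + (F y + \sum_(t | (t != x) && (t != y)) F t).
Proof. exact: big2. Qed.

Lemma sum_lt (a b : I -> nat) (x : I) : (forall t, a t <= b t) -> a x < b x ->
  \sum_t a t < \sum_t b t.
Proof.
move=> hab hx; rewrite (bigD1 x) //= [X in _ < X](bigD1 x) //=.
by rewrite -addSn leq_add // leq_sum.
Qed.

Lemma amgm (b : I -> nat) : (forall x y, b x <= b y + 1) ->
  forall a : I -> nat, \sum_t a t = \sum_t b t -> \prod_t a t <= \prod_t b t.
Proof.
move=> beq.
suff H : forall N (a : I -> nat), \sum_t (a t - b t) <= N -> \sum_t a t = \sum_t b t ->
  \prod_t a t <= \prod_t b t by move=> a; apply: (H _ a (leqnn _)).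
elim=> [|N IH] a hN hs; (case: (pickP (fun x => b x < a x)) => [x hx|hn];
  last by apply: leq_prod => t _; have := hn t; rewrite /= ltnNge => /negbFE).
- move: hN; rewrite (bigD1 x) //=; lia.
- have [y hy] : exists y, a y < b y.
    case: (pickP (fun y => a y < b y)) => [y hy|hn']; first by exists y.
    have : \sum_t b t < \sum_t a t.
      apply: (sum_lt (x:=x)) => // t; have := hn' t; rewrite /= ltnNge => /negbFE //.
    by rewrite hs ltnn.
  have nxy : x != y by apply/eqP => exy; move: hx hy; rewrite exy; lia.
  pose a' t := if t == x then (a x).-1 else if t == y then (a y).+1 else a t.
  have ea : forall t, (t != x) && (t != y) -> a' t = a t.
    by move=> t /andP[/negbTE h1 /negbTE h2]; rewrite /a' h1 h2.
  have hbx := beq y x.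
  apply: (@leq_trans (\prod_t a' t)).
    rewrite (prod2 _ nxy) [X in _ <= X](prod2 _ nxy) (eq_bigr _ ea).
    rewrite /a' eqxx eq_sym (negbTE nxy) eqxx.
    rewrite !mulnA; apply: leq_mul => //; nia.
  apply: IH.
    rewrite (sum2 _ nxy) in hN; rewrite (sum2 _ nxy).
    rewrite (eq_bigr _ (fun t h => congr1 (fun z => z - b t) (ea t h))).
    rewrite /a' eqxx eq_sym (negbTE nxy) eqxx; lia.
  rewrite -hs (sum2 _ nxy) [X in _ = X](sum2 _ nxy) (eq_bigr _ ea).
  rewrite /a' eqxx eq_sym (negbTE nxy) eqxx.
  by rewrite addnS -addSn prednK // (leq_ltn_trans _ hx).
Qed.

End AMGM.

Section G.
Variable p : nat.
Hypothesis p_gt0 : 0 < p.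
Local Notation k := p.+1.

Definition cd (n : nat) := (n + p) %/ k.

Lemma cd_ge n : n <= k * cd n.
Proof.
have h := divn_eq (n + p) k; have hr : (n + p) %% k < k by rewrite ltn_mod.
rewrite /cd mulnC; lia.
Qed.

Lemma cd_lt n : k * cd n < n + k.
Proof.
have h := divn_eq (n + p) k; rewrite /cd mulnC; lia.
Qed.

Lemma cd_uniq n c : n <= k * c -> k * c < n + k -> c = cd n.
Proof.
move=> h1 h2; have h3 := cd_ge n; have h4 := cd_lt n.
apply/eqP; rewrite eqn_leq; apply/andP; split.
- rewrite -ltnS -(ltn_pmul2l (ltn0Sn p)) mulnS; lia.
- rewrite -ltnS -(ltn_pmul2l (ltn0Sn p)) mulnS; lia.
Qed.

Lemma cd_ltn n : k <= n -> cd n < n.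
Proof.
move=> hn; rewrite /cd ltn_divLR //; nia.
Qed.

Lemma cd_le n : cd n <= n.
Proof.
by rewrite /cd -ltnS ltn_divLR //; nia.
Qed.

Fixpoint gf (fuel n : nat) : nat :=
  match fuel with
  | 0 => 0
  | f.+1 => if n < k then 0 else gf f (cd n) + Q p (n - cd n)
  end.

Definition g n := gf n n.

Lemma gf_indep f1 f2 n : n <= f1 -> n <= f2 -> gf f1 n = gf f2 n.
Proof.
elim: f1 f2 n => [|f1 IH] [|f2] n h1 h2 /=.
- by [].
- by move: h1; rewrite leqn0 => /eqP ->.
- by move: h2; rewrite leqn0 => /eqP ->.
- case: ltnP => // hn; congr (_ + _); apply: IH.
  + by have := cd_ltn hn; lia.
  + by have := cd_ltn hn; lia.
Qed.

Lemma gE n : g n = if n < k then 0 else g (cd n) + Q p (n - cd n).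
Proof.
rewrite /g; case: n => [|n] //=; case: ltnP => // hn; congr (_ + _).
apply: gf_indep => //; have := cd_ltn hn; lia.
Qed.

Lemma g_small n : n < k -> g n = 0.
Proof. by move=> h; rewrite gE h. Qed.

Lemma cd_mono m n : m <= n -> cd m <= cd n.
Proof. move=> h; rewrite /cd; apply: leq_div2r; lia. Qed.

Lemma cd_diff m n : m <= n -> m - cd m <= n - cd n.
Proof.
move=> h; have := cd_ge m; have := cd_lt n; have := cd_mono h.
have := cd_le m; have := cd_le n => h1 h2 h3 h4 h5.
suff : cd n <= cd m + (n - m) by lia.
rewrite -ltnS -(ltn_pmul2l (ltn0Sn p)); nia.
Qed.

Lemma Key n : forall m, k <= n -> n <= k * m -> m < n -> g m + Q p (n - m) <= g n.
Proof.
elim: n {-2}n (leqnn n) => [|N IHN] n hnN.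
  by move=> m hn; move: hnN; rewrite leqn0 => /eqP h; subst n.
move=> m; elim: m {-2}m (leqnn m) => [|M IHM] m hmM hn hkm hmn.
  by move: hmM; rewrite leqn0 => /eqP h; subst m; move: hkm; rewrite muln0; lia.
set c := cd n.
have hc : c <= m by rewrite /c -ltnS -(ltn_pmul2l (ltn0Sn p)) mulnS; have := cd_lt n; lia.
have gn : g n = g c + Q p (n - c) by rewrite gE ltnNge hn.
rewrite gn.
case: (ltnP m k) => hmk.
  rewrite g_small // add0n; apply: leq_trans (leq_addl _ _); apply: (Q_mono p_gt0); lia.
set m' := cd m.
have gm : g m = g m' + Q p (m - m') by rewrite gE ltnNge hmk.
rewrite gm.
have hm'm : m' < m by apply: cd_ltn.
case: (leqP c m') => hcm'.
- apply: (@leq_trans (g m' + Q p (n - m'))).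
    rewrite -addnA leq_add2l; have := Qsup p_gt0 (m - m') (n - m).
    have -> : m - m' + (n - m) = n - m' by lia.
    by [].
  rewrite -gn; apply: (IHM m') => //; first by lia.
  + have := cd_ge n; rewrite -/c => h; apply: (leq_trans h); by rewrite leq_pmul2l.
  + lia.
- have hmaj : Q p (m - m') + Q p (n - m) <= Q p (n - c) + Q p (c - m').
    have hx : c - m' <= n - m.
      have := cd_diff (ltnW hmn); rewrite -/c -/m'; lia.
    have := Qmaj p_gt0 (m - c) hx.
    have -> : c - m' + (m - c) = m - m' by lia.
    have -> : n - m + (m - c) = n - c by lia.
    lia.
  apply: (@leq_trans (g m' + Q p (c - m') + Q p (n - c))); first by lia.
  rewrite leq_add2r.
  case: (ltnP c k) => hck.
    have hm'1 : 0 < m'.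
      rewrite /m' -(ltn_pmul2l (ltn0Sn p)) muln0; have := cd_ge m; lia.
    by rewrite (g_small hck) g_small ?Q_small //; lia.
  apply: (IHN c) => //.
  + have := cd_ltn hn; rewrite -/c; lia.
  + have := cd_ge m; rewrite -/m'; lia.
Qed.

End G.

Section Hyp.
Variable T : finType.
Variable k : nat.

Lemma card_bigcup_seq (P : 'I_k -> {set T}) (r : seq 'I_k) :
  uniq r -> (forall i j, i != j -> [disjoint P i & P j]) ->
  #|\bigcup_(i <- r) P i| = \sum_(i <- r) #|P i|.
Proof.
move=> ur hd; elim: r ur => [|a r IH] /=; first by rewrite !big_nil cards0.
move=> /andP[ar ur]; rewrite !big_cons cardsU IH //.
suff -> : P a :&: \bigcup_(i <- r) P i = set0 by rewrite cards0 subn0.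
rewrite bigcup_seq; apply/setP => x; rewrite !inE; apply/negP => /andP[xa /bigcupP[j jr xj]].
have naj : a != j by apply/eqP => eaj; move: ar; rewrite eaj jr.
by move: (hd _ _ naj) => /disjoint_setI0 /setP /(_ x); rewrite !inE xa xj.
Qed.

Lemma card_bigcup_disj (P : 'I_k -> {set T}) :
  (forall i j, i != j -> [disjoint P i & P j]) ->
  #|\bigcup_(i < k) P i| = \sum_(i < k) #|P i|.
Proof. by move=> hd; apply: card_bigcup_seq => //; apply: index_enum_uniq. Qed.

Lemma inG_sub (V : {set T}) (E : {set {set T}}) : inG k V E -> forall e, e \in E -> e \subset V.
Proof.
elim=> [W _ e|W P Es hk [hd hU hlt] _ IH e]; first by rewrite inE.
rewrite inE => /orP[/bigcupP[j _ ej]|].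
  by rewrite -hU; apply: subset_trans (IH j e ej) (bigcup_sup _ _).
by rewrite inE => /andP[].
Qed.

Lemma isH_sub (V : {set T}) (E : {set {set T}}) : isH k V E -> forall e, e \in E -> e \subset V.
Proof.
elim=> [W _ e|W P Es hk [hd hU hlt] _ _ IH e]; first by rewrite inE.
rewrite inE => /orP[/bigcupP[j _ ej]|].
  by rewrite -hU; apply: subset_trans (IH j e ej) (bigcup_sup _ _).
by rewrite inE => /andP[].
Qed.

Lemma goodG_in (V : {set T}) (E : {set {set T}}) v : goodG k V E v -> v \in V.
Proof.
elim=> // W P Es i w hk [hd hU hlt] _ _ _ IH.
by rewrite -hU; apply/bigcupP; exists i.
Qed.

Lemma goodH_in (V : {set T}) (E : {set {set T}}) v : goodH k V E v -> v \in V.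
Proof.
elim=> // W P Es i w hk [hd hU hlt] _ _ _ _ IH.
by rewrite -hU; apply/bigcupP; exists i.
Qed.


Lemma cross_count (V : {set T}) (P : 'I_k -> {set T}) (i : 'I_k) (v : T) :
  kpartition V P -> v \in P i ->
  #|[set e : {set T} | [&& e \subset V, #|e| == k, [forall j, #|e :&: P j| == 1] & v \in e]]|
  = \prod_(j < k | j != i) #|P j|.
Proof.
move=> [hd hU hlt] vi.
have PV j : P j \subset V by rewrite -hU; apply: (bigcup_sup j (P := predT)).
have same j j' x : x \in P j -> x \in P j' -> j = j'.
  move=> xj xj'; apply/eqP; apply/negPn/negP => njj.
  by move: (hd _ _ njj) => /disjoint_setI0 /setP /(_ x); rewrite !inE xj xj'.
pose F := fun j : 'I_k => [pred x : T | if j == i then x == v else x \in P j].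
have Fin f : f \in family F -> forall j, f j \in P j.
  move=> /familyP hf j; move: (hf j); rewrite /F inE.
  by case: (eqVneq j i) => [->/eqP->|].
have finj f : f \in family F -> injective f.
  by move=> hf j j' e; apply: (same _ _ (f j)) (Fin f hf j) _; rewrite e Fin.
pose phi := fun f : {ffun 'I_k -> T} => f @: [set: 'I_k].
have -> : [set e : {set T} | [&& e \subset V, #|e| == k, [forall j, #|e :&: P j| == 1] & v \in e]]
   = phi @: family F.
  apply/setP => e; rewrite inE; apply/idP/idP.
  - case/and4P => eV ek /forallP e1 ve.
    have /fin_all_exists [f hf] : forall j : 'I_k, exists x : T, e :&: P j = [set x].
      by move=> j; apply/cards1P; apply: e1.
    apply/imsetP; exists (finfun f).
      apply/familyP => j; rewrite /F inE ffunE.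
      case: (eqVneq j i) => [->|_].
        have : v \in e :&: P i by rewrite inE ve vi.
        by rewrite hf inE eq_sym.
      have : f j \in e :&: P j by rewrite hf set11.
      by rewrite inE => /andP[].
    apply/setP => x; apply/idP/imsetP.
    + move=> xe; have : x \in V by apply: (subsetP eV).
      rewrite -hU => /bigcupP[j _ xj]; exists j => //; rewrite ffunE.
      have : x \in e :&: P j by rewrite inE xe xj.
      by rewrite hf inE => /eqP.
    + case=> j _ ->; rewrite ffunE.
      have : f j \in e :&: P j by rewrite hf set11.
      by rewrite inE => /andP[].
  - case/imsetP => f hf ->; apply/and4P; split.
    + by apply/subsetP => x /imsetP[j _ ->]; apply: (subsetP (PV j)); apply: Fin.
    + by rewrite card_imset ?cardsT ?card_ord //; apply: finj.
    + apply/forallP => j; apply/eqP.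
      have -> : phi f :&: P j = [set f j]; last by rewrite cards1.
      apply/setP => x; rewrite !inE; apply/andP/eqP.
      * by case=> /imsetP[j' _ ->] xj; rewrite (same _ _ _ (Fin f hf j') xj).
      * by move=> ->; split; [apply: imset_f; rewrite inE | apply: Fin].
    + apply/imsetP; exists i; first by rewrite inE.
      by move/familyP: hf => /(_ i); rewrite /F inE eqxx => /eqP.
rewrite card_in_imset; last first.
  move=> f f' hf hf' e; apply/ffunP => j.
  have : f j \in phi f' by rewrite -e; apply: imset_f; rewrite inE.
  case/imsetP => j' _ ej; rewrite ej.
  by rewrite (same j j' (f j) (Fin f hf j)) // ej Fin.
rewrite card_family foldrE big_image /= (bigD1 i) //=.
have -> : #|F i| = 1.
  by rewrite -(card1 v); apply: eq_card => x; rewrite /F !inE eqxx.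
rewrite mul1n; apply: eq_bigr => j nji; apply: eq_card => x.
by rewrite -topredE /= (negbTE nji).
Qed.


Lemma deg_join (V : {set T}) (P : 'I_k -> {set T}) (Es : 'I_k -> {set {set T}}) (i : 'I_k) (v : T) :
  1 < k -> kpartition V P -> (forall j e, e \in Es j -> e \subset P j) -> v \in P i ->
  deg (joinE V P Es) v = deg (Es i) v + \prod_(j < k | j != i) #|P j|.
Proof.
move=> k1 hP hsub vi; have [hd hU hlt] := hP.
have same j j' x : x \in P j -> x \in P j' -> j = j'.
  move=> xj xj'; apply/eqP; apply/negPn/negP => njj.
  by move: (hd _ _ njj) => /disjoint_setI0 /setP /(_ x); rewrite !inE xj xj'.
have [j0 nj0] : exists j : 'I_k, j != i.
  have h : ((i : nat) == 0) < k by case: (_ == 0) => //; apply: ltnW.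
  exists (Ordinal h); apply/eqP => /(congr1 val) /=.
  by case: (nat_of_ord i).
rewrite /deg -(cross_count hP vi) -cardsUI.
have -> : [set e in Es i | v \in e] :&: [set e : {set T} | [&& e \subset V, #|e| == k,
      [forall j, #|e :&: P j| == 1] & v \in e]] = set0.
  apply/setP => e; rewrite !inE; apply/negP => /andP[/andP[ei _] /and4P[_ _ /forallP /(_ j0) h _]].
  have : e :&: P j0 = set0.
    apply/setP => x; rewrite !inE; apply/negP => /andP[xe xj0].
    have xi : x \in P i by apply: (subsetP (hsub _ _ ei)).
    by move: nj0; rewrite (same _ _ _ xj0 xi) eqxx.
  by move=> e0; move: h; rewrite e0 cards0.
rewrite cards0 addn0; apply: eq_card => e; rewrite !inE.
apply/idP/idP.
- case/andP => /orP[/bigcupP[j _ ej] ve|]; last by case/and3P => -> -> -> ->; rewrite orbT.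
  have ji : j = i by apply: (same _ _ v) => //; apply: (subsetP (hsub _ _ ej)).
  by rewrite -ji ej ve.
- case/orP => [/andP[ei ve]|/and4P[a b c d]]; last by rewrite a b c d orbT.
  by rewrite ve andbT; apply/orP; left; apply/bigcupP; exists i.
Qed.

End Hyp.

Lemma big_lift_ne (R : Type) (idx : R) (op : Monoid.com_law idx) n (i : 'I_n.+1)
   (F : 'I_n.+1 -> R) :
  \big[op/idx]_(j | j != i) F j = \big[op/idx]_(t < n) F (lift i t).
Proof.
pose G j := if j == i then idx else F j.
have h1 := @bigD1_ord R op idx n.+1 i predT G isT.
have h2 := @bigD1 R op idx _ i predT G isT.
rewrite h2 /G eqxx !Monoid.mul1m in h1.
have -> : \big[op/idx]_(j | j != i) F j = \big[op/idx]_(j | predT j && (j != i)) G j.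
  by apply: eq_big => [j //|j /negbTE hj]; rewrite /G hj.
rewrite h1; apply: eq_bigr => t _; rewrite /G.
by have -> : (lift i t == i) = false by apply/negbTE; rewrite eq_sym neq_lift.
Qed.

Section Final.
Variable p : nat.
Hypothesis p_gt0 : 0 < p.
Variable T : finType.

Lemma part_sum (V : {set T}) (P : 'I_p.+1 -> {set T}) :
  kpartition V P -> \sum_(j < p.+1) #|P j| = #|V|.
Proof. by case=> hd hU _; rewrite -hU card_bigcup_disj. Qed.

Lemma sum_lift (P : 'I_p.+1 -> {set T}) i :
  \sum_(j < p.+1) #|P j| = #|P i| + \sum_(t < p) #|P (lift i t)|.
Proof. by rewrite (bigD1 i) //= big_lift_ne. Qed.

Lemma G_bound (V : {set T}) (E : {set {set T}}) v :
  goodG p.+1 V E v -> deg E v <= g p #|V|.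
Proof.
elim=> [W w _ _|W P Es i w hk hP hin hmax hgood IH].
  by rewrite /deg (_ : [set e in set0 | _] = set0) ?cards0 //; apply/setP => e; rewrite !inE.
have hsub j e : e \in Es j -> e \subset P j by apply: inG_sub.
rewrite (deg_join _ hP hsub (goodG_in hgood)) //.
rewrite big_lift_ne.
set a := fun t : 'I_p => #|P (lift i t)|.
have hsum := sum_lift P i; rewrite (part_sum hP) in hsum.
have hprod : \prod_(t < p) a t <= Q p (\sum_(t < p) a t).
  apply: amgm; first by move=> x y; apply: can_eq.
  by rewrite sum_can.
have hkm : #|W| <= p.+1 * #|P i|.
  rewrite -(part_sum hP); apply: (@leq_trans (\sum_(j < p.+1) #|P i|)); first by apply: leq_sum => j _; apply: hmax.
  by rewrite sum_nat_const card_ord.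
have hlt := (let: And3 _ _ h := hP in h) i.
apply: (leq_trans (leq_add IH hprod)).
have -> : \sum_(t < p) a t = #|W| - #|P i| by rewrite /a; lia.
by apply: Key.
Qed.

Lemma H_eq (V : {set T}) (E : {set {set T}}) v :
  goodH p.+1 V E v -> deg E v = g p #|V|.
Proof.
elim=> [W w hW _|W P Es i w hk hP heq hin hmax hgood IH].
  rewrite g_small //.
  by rewrite /deg (_ : [set e in set0 | _] = set0) ?cards0 //; apply/setP => e; rewrite !inE.
have hsub j e : e \in Es j -> e \subset P j by apply: isH_sub.
rewrite (deg_join _ hP hsub (goodH_in hgood)) // IH.
rewrite big_lift_ne.
set a := fun t : 'I_p => #|P (lift i t)|.
have hsum := sum_lift P i; rewrite (part_sum hP) in hsum.
have hprod : \prod_(t < p) a t = Q p (\sum_(t < p) a t).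
  apply/eqP; rewrite eqn_leq; apply/andP; split.
    apply: amgm; first by move=> x y; apply: can_eq.
    by rewrite sum_can.
  apply: amgm; first by move=> x y; apply: heq.
  by rewrite sum_can.
have hkm : #|W| <= p.+1 * #|P i|.
  rewrite -(part_sum hP); apply: (@leq_trans (\sum_(j < p.+1) #|P i|)); first by apply: leq_sum => j _; apply: hmax.
  by rewrite sum_nat_const card_ord.
have hkm2 : p.+1 * #|P i| < #|W| + p.+1.
  rewrite -(part_sum hP).
  have -> : \sum_(j < p.+1) #|P j| + p.+1 = \sum_(j < p.+1) (#|P j| + 1).
    by rewrite big_split /= sum_nat_const card_ord muln1.
  have -> : p.+1 * #|P i| = \sum_(j < p.+1) #|P i| by rewrite sum_nat_const card_ord.
  apply: (sum_lt (x := i)) => [j|]; [exact: heq | by rewrite addn1].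
have hc := cd_uniq p_gt0 hkm hkm2.
have hf : (#|W| < p.+1) = false by apply/negbTE; rewrite -leqNgt.
rewrite hprod (gE p_gt0 #|W|) hf -hc.
congr (_ + _); congr (Q p _); rewrite /a; lia.
Qed.

End Final.

Unset Implicit Arguments.
Theorem lemma5p4 (k : nat) (T : finType) (V : {set T}) (E : {set {set T}})
    (v : T) :
  3 <= k -> inG k V E -> goodG k V E v ->
  forall (T' : finType) (V' : {set T'}) (E' : {set {set T'}}) (w : T'),
    #|V'| = #|V| -> isH k V' E' -> goodH k V' E' w ->
    deg E v <= deg E' w.
Proof.
case: k => [|p] // hk _ hg T' V' E' w hc _ hh.
have hp : 0 < p by lia.
by rewrite (H_eq hp hh) hc; apply: G_bound.
Qed.
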